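(* Let $S$ be a semigroup generated by a finite set $A$, and let $\eta$ be a congruence on $S$. Then the natural map $\phi:(S,d_A)\to(S/\eta,d_{A/\eta})$, $s\mapsto s/\eta$, is a quasi-isometry if and only if there is a finite bound on the $d_A$-diameters of the $\eta$-classes of $S$.
   Context: For a semigroup $T$ generated by a finite set $B$, $d_B(x,y)=\inf\{|w|:w\in B^*,\ xw=y\}$ ($B^*$ the free monoid on $B$, $\inf\emptyset=\infty$). Here $A/\eta=\{a/\eta:a\in A\}$, a finite generating set of $S/\eta$. The $d_A$-diameter of a set $C\subseteq S$ is $\sup_{x,y\in C}d_A(x,y)$. A map $f:(X,d)\to(X',d')$ is a quasi-isometry if there are $1\le\lambda<\infty$, $0<\epsilon<\infty$, $0\le\mu<\infty$ with $\frac1\lambda d(x,y)-\epsilon\le d'(f(x),f(y))\le\lambda d(x,y)+\epsilon$ for all $x,y$, and for every $x'\in X'$ some $x$ with $\max(d'(x',f(x)),d'(f(x),x'))\le\mu$. *)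

(* Defs.v *)
From Stdlib Require Import Reals List ClassicalEpsilon.
From Coquelicot Require Import Coquelicot.
Import ListNotations.
Open Scope R_scope.

Section Defs.
Context {T : Type} (mul : T -> T -> T).

Definition act_word (x : T) (w : list T) : T := List.fold_left mul w x.

Definition word_over (B : list T) (w : list T) : Prop := List.Forall (fun b => In b B) w.

Definition generates (B : list T) : Prop :=
  forall s : T, exists a w, In a B /\ word_over B w /\ s = act_word a w.

(* d_B(x,y) = inf { |w| : w in B^*, x w = y }, with inf of the empty set = +oo *)
Definition word_dist (B : list T) (x y : T) : Rbar :=
  Glb_Rbar (fun r => exists w, word_over B w /\ act_word x w = y /\ r = INR (List.length w)).
End Defs.

Definition associative_op {S : Type} (mul : S -> S -> S) : Prop :=
  forall a b c, mul a (mul b c) = mul (mul a b) c.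

Definition congruence {S : Type} (mul : S -> S -> S) (eta : S -> S -> Prop) : Prop :=
  (forall a, eta a a) /\ (forall a b, eta a b -> eta b a) /\
  (forall a b c, eta a b -> eta b c -> eta a c) /\
  (forall a b c, eta a b -> eta (mul c a) (mul c b) /\ eta (mul a c) (mul b c)).

Definition quot {S : Type} (eta : S -> S -> Prop) : Type :=
  {P : S -> Prop | exists s, P = eta s}.

Definition cls {S : Type} (eta : S -> S -> Prop) (s : S) : quot eta :=
  exist _ (eta s) (ex_intro _ s eq_refl).

Definition rep {S : Type} {eta : S -> S -> Prop} (P : quot eta) : S :=
  proj1_sig (constructive_indefinite_description _ (proj2_sig P)).

Definition qmul {S : Type} (mul : S -> S -> S) (eta : S -> S -> Prop)
  (P Q : quot eta) : quot eta := cls eta (mul (rep P) (rep Q)).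

Definition qgens {S : Type} (eta : S -> S -> Prop) (A : list S) : list (quot eta) :=
  List.map (cls eta) A.

Definition quasi_isometry {X X' : Type} (d : X -> X -> Rbar) (d' : X' -> X' -> Rbar)
  (f : X -> X') : Prop :=
  exists lam eps mu : R, 1 <= lam /\ 0 < eps /\ 0 <= mu /\
    (forall x y : X,
       Rbar_le (Rbar_minus (Rbar_mult (/ lam) (d x y)) eps) (d' (f x) (f y)) /\
       Rbar_le (d' (f x) (f y)) (Rbar_plus (Rbar_mult lam (d x y)) eps)) /\
    (forall x' : X', exists x : X,
       Rbar_le (d' x' (f x)) mu /\ Rbar_le (d' (f x) x') mu).

Definition bounded_class_diameters {S : Type} (mul : S -> S -> S) (A : list S)
  (eta : S -> S -> Prop) : Prop :=
  exists K : R, forall x y : S, eta x y -> Rbar_le (word_dist mul A x y) K.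

(* Main.v *)
Require Import Defs.
From Stdlib Require Import Reals List.
From Coquelicot Require Import Coquelicot.
From Stdlib Require Import Lra Classical FunctionalExtensionality PropExtensionality ProofIrrelevance.
Import ListNotations.
Open Scope R_scope.

Section WD.
Context {T : Type} (mul : T -> T -> T) (B : list T).

Lemma wd_le x y w : word_over B w -> act_word mul x w = y ->
  Rbar_le (word_dist mul B x y) (INR (length w)).
Proof.
  intros Hw Ha. destruct (Glb_Rbar_correct (fun r => exists w, word_over B w /\ act_word mul x w = y /\ r = INR (length w))) as [H1 _].
  apply H1. eauto.
Qed.

Lemma wd_nonneg x y : Rbar_le 0 (word_dist mul B x y).
Proof.
  destruct (Glb_Rbar_correct (fun r => exists w, word_over B w /\ act_word mul x w = y /\ r = INR (length w))) as [_ H2].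
  apply H2. intros r [w [_ [_ ->]]]. simpl. apply pos_INR.
Qed.

Lemma wd_approx x y (K : R) : Rbar_le (word_dist mul B x y) K ->
  exists v, word_over B v /\ act_word mul x v = y /\ INR (length v) < K + 1.
Proof.
  intros H. apply NNPP. intros Hn.
  destruct (Glb_Rbar_correct (fun r => exists w, word_over B w /\ act_word mul x w = y /\ r = INR (length w))) as [_ H2].
  assert (Hl : Rbar_le (K+1) (word_dist mul B x y)).
  { apply H2. intros r [w [Hw [Ha ->]]]. simpl.
    destruct (Rlt_or_le (INR (length w)) (K+1)) as [h|h]; auto.
    exfalso; apply Hn; eauto. }
  destruct (word_dist mul B x y); simpl in *; lra.
Qed.
End WD.

Lemma wd_bound {T T' : Type} (m : T -> T -> T) (m' : T' -> T' -> T') B B' x y x' y' (c : R) :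
  0 <= c ->
  (forall v, word_over B' v -> act_word m' x' v = y' ->
     exists u, word_over B u /\ act_word m x u = y /\ INR (length u) <= INR (length v) + c) ->
  Rbar_le (word_dist m B x y) (Rbar_plus (word_dist m' B' x' y') c).
Proof.
  intros Hc H.
  pose proof (wd_nonneg m' B' x' y') as H0.
  destruct (word_dist m' B' x' y') as [r| |] eqn:E;
    [| destruct (word_dist m B x y); simpl; auto | simpl in H0; contradiction].
  assert (Hr : Rbar_le (word_dist m' B' x' y') r) by (rewrite E; simpl; lra).
  destruct (wd_approx m' B' x' y' r Hr) as [v [Hv [Ha _]]].
  destruct (H v Hv Ha) as [u [Hu [Hu2 _]]].
  pose proof (wd_le m B x y u Hu Hu2) as Hd.
  pose proof (wd_nonneg m B x y) as Hd0.
  destruct (word_dist m B x y) as [s| |] eqn:Es; simpl in *; try contradiction; auto.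
  destruct (Glb_Rbar_correct (fun r => exists w, word_over B' w /\ act_word m' x' w = y' /\ r = INR (length w))) as [_ H2].
  assert (Hl : Rbar_le (s - c) (word_dist m' B' x' y')).
  { apply H2. intros q [w [Hw [Haw ->]]]. simpl.
    destruct (H w Hw Haw) as [u' [Hu' [Hu2' Hl']]].
    pose proof (wd_le m B x y u' Hu' Hu2') as Hd'. rewrite Es in Hd'. simpl in Hd'. lra. }
  rewrite E in Hl. simpl in Hl. lra.
Qed.

Section Q.
Context {S : Type} (mul : S -> S -> S) (eta : S -> S -> Prop) (Hc : congruence mul eta).

Lemma quot_ext (P Q : quot eta) : proj1_sig P = proj1_sig Q -> P = Q.
Proof. destruct P, Q; simpl; intros ->; f_equal; apply proof_irrelevance. Qed.

Lemma cls_eq s t : eta s t -> cls eta s = cls eta t.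
Proof.
  destruct Hc as [Hr [Hs [Ht _]]]. intros H. apply quot_ext; simpl.
  apply functional_extensionality; intros z; apply propositional_extensionality; split; eauto.
Qed.

Lemma cls_inj s t : cls eta s = cls eta t -> eta s t.
Proof.
  destruct Hc as [Hr _]. intros H. apply (f_equal (@proj1_sig _ _)) in H. simpl in H.
  rewrite H. apply Hr.
Qed.

Lemma rep_spec (P : quot eta) : proj1_sig P = eta (rep P).
Proof. unfold rep. destruct (ClassicalEpsilon.constructive_indefinite_description _ _); simpl; auto. Qed.

Lemma cls_rep (P : quot eta) : cls eta (rep P) = P.
Proof. apply quot_ext; simpl. symmetry; apply rep_spec. Qed.

Lemma qmul_cls x a : qmul mul eta (cls eta x) (cls eta a) = cls eta (mul x a).
Proof.
  destruct Hc as [Hr [Hs [Ht Hm]]]. unfold qmul. apply cls_eq.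
  assert (E1 : eta x (rep (cls eta x))) by (pose proof (rep_spec (cls eta x)) as E; simpl in E; rewrite E; apply Hr).
  assert (E2 : eta a (rep (cls eta a))) by (pose proof (rep_spec (cls eta a)) as E; simpl in E; rewrite E; apply Hr).
  apply Ht with (mul x (rep (cls eta a))).
  - apply Hs. apply (Hm _ _ _ E1).
  - apply Hs. apply (Hm _ _ _ E2).
Qed.

Lemma act_cls x u : act_word (qmul mul eta) (cls eta x) (map (cls eta) u) = cls eta (act_word mul x u).
Proof.
  revert x; induction u as [|a u IH]; intros x; simpl; auto.
  unfold act_word in *; simpl. rewrite qmul_cls. apply IH.
Qed.

Lemma lift_word A v : word_over (qgens eta A) v -> exists u, word_over A u /\ map (cls eta) u = v.
Proof.
  induction v as [|b v IH]; intros H.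
  - exists []; split; [constructor|reflexivity].
  - inversion H as [|? ? Hb Hv]; subst. destruct (IH Hv) as [u [Hu <-]].
    unfold qgens in Hb. apply in_map_iff in Hb. destruct Hb as [a [<- Ha]].
    exists (a :: u); split; [constructor; auto | reflexivity].
Qed.

Lemma map_word A u : word_over A u -> word_over (qgens eta A) (map (cls eta) u).
Proof.
  induction 1; simpl; constructor; auto. unfold qgens; apply in_map; auto.
Qed.
End Q.

Lemma Rbar_mult_pinf c : 0 < c -> Rbar_mult c p_infty = p_infty.
Proof.
  intros h. unfold Rbar_mult, Rbar_mult'. destruct (Rle_dec 0 c); [|lra].
  destruct (Rle_lt_or_eq_dec 0 c r); auto. lra.
Qed.

Lemma Rbar_mult_one x : Rbar_mult 1 x = x.
Proof.
  destruct x; simpl; [f_equal; ring| |]; unfold Rbar_mult, Rbar_mult';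
  destruct (Rle_dec 0 1); try lra; destruct (Rle_lt_or_eq_dec 0 1 r); auto; lra.
Qed.

Theorem proposition8p3 (S : Type) (mul : S -> S -> S) (A : list S)
  (eta : S -> S -> Prop) :
  associative_op mul -> generates mul A -> congruence mul eta ->
  (quasi_isometry (word_dist mul A) (word_dist (qmul mul eta) (qgens eta A)) (cls eta)
   <-> bounded_class_diameters mul A eta).
Proof.
  intros _ _ Hc. split.
  - intros [lam [eps [mu [Hl [He [Hm [Hd _]]]]]]].
    exists (lam * eps). intros x y Hxy.
    destruct (Hd x y) as [H1 _].
    rewrite <- (cls_eq mul eta Hc x y Hxy) in H1.
    pose proof (wd_le (qmul mul eta) (qgens eta A) (cls eta x) (cls eta x) [] (Forall_nil _) eq_refl) as H0.
    simpl in H0.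
    assert (Hi : 0 < / lam) by (apply Rinv_0_lt_compat; lra).
    destruct (word_dist mul A x y) as [s| |]; simpl; auto.
    + destruct (word_dist (qmul mul eta) (qgens eta A) (cls eta x) (cls eta x)); simpl in *; try contradiction.
      assert (/lam * s <= eps) by lra.
      apply Rmult_le_compat_l with (r := lam) in H; [|lra].
      rewrite <- Rmult_assoc, Rinv_r, Rmult_1_l in H; lra.
    + rewrite Rbar_mult_pinf in H1 by auto. simpl in H1.
      destruct (word_dist (qmul mul eta) (qgens eta A) (cls eta x) (cls eta x)); simpl in *; contradiction.
  - intros [K HK].
    set (K' := Rmax K 0).
    exists 1, (K' + 1), 0. split; [lra|]. split; [unfold K'; pose proof (Rmax_r K 0); lra|].
    split; [lra|]. split.
    + intros x y. rewrite Rinv_1, Rbar_mult_one. split.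
      * assert (H : Rbar_le (word_dist mul A x y)
            (Rbar_plus (word_dist (qmul mul eta) (qgens eta A) (cls eta x) (cls eta y)) (K' + 1))).
        { apply wd_bound; [unfold K'; pose proof (Rmax_r K 0); lra|].
          intros v Hv Ha. destruct (lift_word eta A v Hv) as [u [Hu <-]].
          rewrite (act_cls mul eta Hc) in Ha. apply (cls_inj mul eta Hc) in Ha.
          specialize (HK _ _ Ha).
          assert (HK2 : Rbar_le (word_dist mul A (act_word mul x u) y) K') by
            (destruct (word_dist mul A (act_word mul x u) y); simpl in *; auto; unfold K'; pose proof (Rmax_l K 0); lra).
          destruct (wd_approx mul A _ _ _ HK2) as [w [Hw [Haw Hlw]]].
          exists (u ++ w). split; [apply Forall_app; auto|]. split.
          - unfold act_word in *. rewrite fold_left_app. auto.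
          - rewrite app_length, plus_INR, map_length. lra. }
        pose proof (wd_nonneg (qmul mul eta) (qgens eta A) (cls eta x) (cls eta y)).
        destruct (word_dist mul A x y), (word_dist (qmul mul eta) (qgens eta A) (cls eta x) (cls eta y));
          simpl in *; auto; lra.
      * assert (H : Rbar_le (word_dist (qmul mul eta) (qgens eta A) (cls eta x) (cls eta y))
            (Rbar_plus (word_dist mul A x y) (K' + 1))).
        { apply wd_bound; [unfold K'; pose proof (Rmax_r K 0); lra|].
          intros v Hv Ha. exists (map (cls eta) v). split; [apply map_word; auto|]. split.
          - rewrite (act_cls mul eta Hc), Ha. auto.
          - rewrite map_length. unfold K'; pose proof (Rmax_r K 0); lra. }
        exact H.
    + intros x'. exists (rep x'). rewrite (cls_rep eta). 
      pose proof (wd_le (qmul mul eta) (qgens eta A) x' x' [] (Forall_nil _) eq_refl) as H0.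
      simpl in H0. auto.
Qed.
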